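(* Let $n\geq 1$, $r\geq 1$, $q\geq 2$, and fix an initial configuration of room states. If $n$ prisoners do not have a winning strategy for $r$ rooms with $q$ states (from this initial configuration), then $n+1$ prisoners do not have a winning strategy for $r$ rooms with $q$ states (from this initial configuration).
   Context: The game: there are $n$ prisoners and $r$ rooms; each room contains a switch that is in one of $q$ states $\{0,1,\ldots,q-1\}$. The initial state of every room is known to the prisoners. A warden leads prisoners into rooms one at a time according to a schedule, i.e. an infinite sequence of (prisoner, room) pairs; a schedule is valid if every prisoner visits every room infinitely often. The rooms are indistinguishable to the prisoners, and prisoners have no information about time or other visits: on each visit a prisoner observes only the current state of the room, may change it to any state, and may declare that all prisoners have visited all rooms. A (deterministic) strategy assigns to each prisoner a rule determining, from the sequence of states that prisoner has observed so far (and their own previous actions), what new state to set and whether to declare. A strategy is winning if for every valid schedule some prisoner eventually declares, and every declaration is made only at a time when every prisoner has already visited every room. Strategies may differ between prisoners. *)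

(* Defs.v *)
From mathcomp Require Import all_boot.
Set Implicit Arguments. Unset Strict Implicit. Unset Printing Implicit Defensive.

(* Prisoners 'I_n, rooms 'I_r, switch states 'I_q = {0,...,q-1}. *)

(* A schedule: at time t the warden leads prisoner (sched t).1 into room (sched t).2. *)
Definition schedule (n r : nat) := nat -> 'I_n * 'I_r.

Definition valid_schedule (n r : nat) (s : schedule n r) : Prop :=
  forall (p : 'I_n) (rm : 'I_r) (N : nat), exists t, N <= t /\ s t = (p, rm).

(* A deterministic strategy: each prisoner, given the sequence of states it has
   observed so far (the last one being the current room's state), chooses the
   new state of the room and whether to declare.  (Its own previous actions are
   determined by its previous observations, since the strategy is deterministic.) *)
Definition strategy (n q : nat) := 'I_n -> seq 'I_q -> 'I_q * bool.

(* Global game state before time t: room configuration and each prisoner's history. *)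
Fixpoint game_state (n r q : nat) (init : 'I_r -> 'I_q) (S : strategy n q)
    (s : schedule n r) (t : nat) : ('I_r -> 'I_q) * ('I_n -> seq 'I_q) :=
  match t with
  | 0 => (init, fun _ => [::])
  | t'.+1 =>
      let: (c, h) := game_state init S s t' in
      let: (p, rm) := s t' in
      let hp := rcons (h p) (c rm) in
      ((fun x => if x == rm then (S p hp).1 else c x),
       (fun y => if y == p then hp else h y))
  end.

Definition declares (n r q : nat) (init : 'I_r -> 'I_q) (S : strategy n q)
    (s : schedule n r) (t : nat) : bool :=
  let: (c, h) := game_state init S s t in
  let: (p, rm) := s t in
  (S p (rcons (h p) (c rm))).2.

Definition all_visited (n r : nat) (s : schedule n r) (t : nat) : Prop :=
  forall (p : 'I_n) (rm : 'I_r), exists t', t' <= t /\ s t' = (p, rm).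

Definition winning (n r q : nat) (init : 'I_r -> 'I_q) (S : strategy n q) : Prop :=
  forall s : schedule n r, valid_schedule s ->
    (exists t, declares init S s t) /\
    (forall t, declares init S s t -> all_visited s t).

Definition has_winning_strategy (n r q : nat) (init : 'I_r -> 'I_q) : Prop :=
  exists S : strategy n q, winning init S.
Arguments has_winning_strategy n r q init : clear implicits.

(* Main.v *)
Require Import Defs.
From mathcomp Require Import all_boot.
Set Implicit Arguments. Unset Strict Implicit. Unset Printing Implicit Defensive.

Lemma gs_succ n r q (init : 'I_r -> 'I_q) (S : strategy n q) (s : schedule n r) t :
  game_state init S s t.+1 =
  (let c := (game_state init S s t).1 in let h := (game_state init S s t).2 in
   let p := (s t).1 in let rm := (s t).2 in
   let hp := rcons (h p) (c rm) in
   ((fun x => if x == rm then (S p hp).1 else c x),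
    (fun y => if y == p then hp else h y))).
Proof. simpl; case: (game_state init S s t) => c h; case: (s t) => p rm //. Qed.

Lemma decl_eq n r q (init : 'I_r -> 'I_q) (S : strategy n q) (s : schedule n r) t :
  declares init S s t =
  (S (s t).1 (rcons ((game_state init S s t).2 (s t).1) ((game_state init S s t).1 (s t).2))).2.
Proof. rewrite /declares; case: (game_state init S s t) => c h; case: (s t) => p rm //. Qed.

Definition w m (p : 'I_m.+1) : 'I_m.+2 := widen_ord (leqnSn _) p.

Definition simn m q (S : strategy m.+2 q) (h : seq 'I_q) : seq 'I_q :=
  [seq (S (w ord0) (take i.+1 h)).1 | i <- iota 0 (size h)].

Lemma simn_rcons m q (S : strategy m.+2 q) h x :
  simn S (rcons h x) = rcons (simn S h) (S (w ord0) (rcons h x)).1.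
Proof.
rewrite /simn size_rcons -addn1 iotaD map_cat /= add0n -[in RHS]cats1; congr (_ ++ _).
  apply/eq_in_map => i; rewrite mem_iota add0n => /= Hi.
  by rewrite -cats1 takel_cat.
by rewrite -cats1 take_oversize // size_cat addn1.
Qed.

Definition T m q (S : strategy m.+2 q) : strategy m.+1 q :=
  fun p h => if p == ord0 then
    let a := S (w ord0) h in let b := S ord_max (simn S h) in (b.1, a.2 || b.2)
  else S (w p) h.

Fixpoint g m r (s : schedule m.+1 r) (u : nat) : nat * bool :=
  match u with
  | 0 => (0, false)
  | u'.+1 => let: (t, b) := g s u' in
             if ~~ b && ((s t).1 == ord0) then (t, true) else (t.+1, false)
  end.

Definition s' m r (s : schedule m.+1 r) : schedule m.+2 r :=
  fun u => let: (t, b) := g s u in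
    if b then (ord_max, (s t).2) else (w (s t).1, (s t).2).

Lemma w_eq m (p p' : 'I_m.+1) : (w p == w p') = (p == p').
Proof. by apply/eqP/eqP => [H|->] //; apply/val_inj; move/(congr1 val): H. Qed.

Lemma w_inj m : injective (@w m).
Proof. by move=> a b /(congr1 val) /= H; apply/val_inj. Qed.

Lemma w_max m (p : 'I_m.+1) : (ord_max == w p) = false.
Proof. apply/negbTE; rewrite neq_ltn /= ltn_ord orbT //. Qed.

Lemma w_max' m (p : 'I_m.+1) : (w p == ord_max) = false.
Proof. by rewrite eq_sym w_max. Qed.

Lemma gS m r (s : schedule m.+1 r) u t :
  g s u = (t, false) -> g s u.+1 = if (s t).1 == ord0 then (t, true) else (t.+1, false).
Proof. by move=> /= ->. Qed.

Lemma gS' m r (s : schedule m.+1 r) u t :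
  g s u = (t, true) -> g s u.+1 = (t.+1, false).
Proof. by move=> /= ->. Qed.

Lemma s'F m r (s : schedule m.+1 r) u t :
  g s u = (t, false) -> s' s u = (w (s t).1, (s t).2).
Proof. by rewrite /s' => ->. Qed.

Lemma s'T m r (s : schedule m.+1 r) u t :
  g s u = (t, true) -> s' s u = (ord_max, (s t).2).
Proof. by rewrite /s' => ->. Qed.

Definition Inv m r q (S : strategy m.+2 q) (init : 'I_r -> 'I_q) (s : schedule m.+1 r) t u :=
  let R := game_state init (T S) s t in
  let Q := game_state init S (s' s) u in
  [/\ forall x, R.1 x = Q.1 x, forall p, R.2 p = Q.2 (w p) & Q.2 ord_max = simn S (R.2 ord0)].

Lemma T_nd m q (S : strategy m.+2 q) p h : p != ord0 -> T S p h = S (w p) h.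
Proof. by rewrite /T => /negbTE ->. Qed.
Lemma T_d m q (S : strategy m.+2 q) h :
  T S ord0 h = ((S ord_max (simn S h)).1, (S (w ord0) h).2 || (S ord_max (simn S h)).2).
Proof. by rewrite /T eqxx. Qed.

Lemma step_nd m r q (S : strategy m.+2 q) init (s : schedule m.+1 r) t u :
  g s u = (t, false) -> (s t).1 != ord0 -> Inv S init s t u ->
  Inv S init s t.+1 u.+1 /\ declares init (T S) s t = declares init S (s' s) u.
Proof.
move=> Hg Hp [Hc Hh Hm].
rewrite /Inv !gs_succ !decl_eq (s'F Hg) /= (T_nd _ _ Hp) Hh Hc.
split=> //; split=> /=.
- by move=> x; rewrite Hc.
- by move=> y; rewrite (inj_eq (@w_inj _)); case: eqP => // _; rewrite Hh Hc.
- by rewrite w_max eq_sym (negbTE Hp).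
Qed.

Lemma step_d m r q (S : strategy m.+2 q) init (s : schedule m.+1 r) t u :
  g s u = (t, false) -> (s t).1 = ord0 -> Inv S init s t u ->
  Inv S init s t.+1 u.+2 /\
  declares init (T S) s t = declares init S (s' s) u || declares init S (s' s) u.+1.
Proof.
move=> Hg Hp [Hc Hh Hm].
have Hg1 : g s u.+1 = (t, true) by rewrite (gS Hg) Hp eqxx.
rewrite /Inv !gs_succ !decl_eq !gs_succ (s'F Hg) (s'T Hg1) /= Hp T_d /=.
rewrite eqxx Hm (Hh ord0) (Hc (s t).2) -simn_rcons.
split; first split.
- by move=> x; case: eqP => // _; rewrite Hc.
- move=> y; rewrite w_max' (inj_eq (@w_inj _)); case: eqP => // ->.
- by rewrite eqxx.
- done.
Qed.

Lemma inv_all m r q (S : strategy m.+2 q) init (s : schedule m.+1 r) u :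
  match g s u with
  | (t, false) => Inv S init s t u
  | (t, true) => exists u', [/\ u = u'.+1, g s u' = (t, false), (s t).1 = ord0 & Inv S init s t u']
  end.
Proof.
elim: u => [|u IH].
  by rewrite /Inv /=; split.
case E: (g s u) IH => [t [|]].
  move=> [u' [Eu Hg Hd Hi]]; rewrite (gS' E) Eu.
  by case: (step_d Hg Hd Hi).
move=> Hi; rewrite (gS E); case: eqP => Hd.
  by exists u; split.
by case: (step_nd E (introN eqP Hd) Hi).
Qed.

Lemma g_ex m r (s : schedule m.+1 r) t : exists u, t <= u /\ g s u = (t, false).
Proof.
elim: t => [|t [u [Htu Hg]]]; first by exists 0.
case Hd: ((s t).1 == ord0).
  exists u.+2; split; first by rewrite ltnS ltnW.
  by apply: gS'; rewrite (gS Hg) Hd.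
by exists u.+1; split => //; rewrite (gS Hg) Hd.
Qed.

Lemma g_step m r (s : schedule m.+1 r) u : (g s u).1 <= (g s u.+1).1.
Proof.
rewrite /=; case: (g s u) => t b; case: ifP => //= _; exact: leqnSn.
Qed.

Lemma g_mono m r (s : schedule m.+1 r) u v : u <= v -> (g s u).1 <= (g s v).1.
Proof.
move/subnK => <-; elim: (v - u) => [|k IH] //=.
exact: leq_trans IH (g_step s (k + u)).
Qed.

Lemma valid_s' m r (s : schedule m.+1 r) : valid_schedule s -> valid_schedule (s' s).
Proof.
move=> Hv P rm N.
case: (ltnP (val P) m.+1) => HP.
  have EP : w (Ordinal HP) = P by apply/val_inj.
  have [t [HNt Hst]] := Hv (Ordinal HP) rm N.
  have [u [Htu Hg]] := g_ex s t.
  exists u; split; first exact: leq_trans HNt Htu.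
  by rewrite (s'F Hg) Hst EP.
have EP : P = ord_max by apply/val_inj; apply/eqP; rewrite eqn_leq HP -ltnS ltn_ord.
have [t [HNt Hst]] := Hv ord0 rm N.
have [u [Htu Hg]] := g_ex s t.
exists u.+1; split; first by apply: leq_trans HNt (leq_trans Htu (leqnSn u)).
have Hg1 : g s u.+1 = (t, true) by rewrite (gS Hg) Hst eqxx.
by rewrite (s'T Hg1) Hst EP.
Qed.

Lemma av_back m r (s : schedule m.+1 r) v :
  all_visited (s' s) v -> all_visited s (g s v).1.
Proof.
move=> H p rm; have [v' [Hv' Hs]] := H (w p) rm.
move: Hs; rewrite /s'; case E: (g s v') => [t' [|]].
  by case=> Hx; move: (ltn_ord p); rewrite -Hx ltnn.
move=> Hs; have Hp := w_inj (congr1 fst Hs); have /= Hr := congr1 snd Hs.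
exists t'; split.
  by move: (g_mono s Hv'); rewrite E.
by rewrite -Hp -Hr -surjective_pairing.
Qed.

Theorem mainTheorem3 (n r q : nat) (hn : 1 <= n) (hr : 1 <= r) (hq : 2 <= q)
    (init : 'I_r -> 'I_q) :
  ~ has_winning_strategy n r q init -> ~ has_winning_strategy n.+1 r q init.
Proof.
case: n hn => [//|m] _ Hno [S HS]; apply: Hno; exists (T S) => s Hv.
have [[u0 Hu0] Hsound] := HS (s' s) (valid_s' Hv).
split.
  have := inv_all S init s u0.
  case E: (g s u0) => [t [|]].
    move=> [u' [Eu Hg Hd Hi]]; exists t.
    by case: (step_d Hg Hd Hi) => _ ->; rewrite -Eu Hu0 orbT.
  move=> Hi; exists t; case Hd: ((s t).1 == ord0).
    by case: (step_d E (eqP Hd) Hi) => _ ->; rewrite Hu0.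
  by case: (step_nd E (negbT Hd) Hi) => _ ->.
move=> t Hdec.
have [u [_ Hg]] := g_ex s t.
have := inv_all S init s u; rewrite Hg => Hi.
case Hd: ((s t).1 == ord0).
  case: (step_d Hg (eqP Hd) Hi) => _ Eq; move: Hdec; rewrite Eq => /orP [H|H].
    by have := av_back (Hsound _ H); rewrite Hg.
  have Hg1 : g s u.+1 = (t, true) by rewrite (gS Hg) Hd.
  by have := av_back (Hsound _ H); rewrite Hg1.
case: (step_nd Hg (negbT Hd) Hi) => _ Eq; move: Hdec; rewrite Eq => H.
by have := av_back (Hsound _ H); rewrite Hg.
Qed.
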